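(* Let $V$ be a real vector space, let $F$ be a geometric mean closed (Archimedean) vector lattice, let $u\in F^+$, and let $T\colon V\times V\to F$ be a vector semi-inner product. Define $\|x\|^T_u:=T(x,x)\boxtimes u$ for $x\in V$. Then $\|\cdot\|^T_u\colon V\to F$ is a vector seminorm, i.e. (a) $\|x\|^T_u\in F^+$ for all $x\in V$; (b) $\|\alpha x\|^T_u=|\alpha|\,\|x\|^T_u$ for all $x\in V$ and $\alpha\in\mathbb{R}$; (c) $\|x+y\|^T_u\le \|x\|^T_u+\|y\|^T_u$ for all $x,y\in V$.
   Context: All vector spaces are over $\mathbb{R}$ and all vector lattices are Archimedean. For a vector lattice $F$, $F^+=\{x\in F: x\ge 0\}$. A vector lattice $F$ is geometric mean closed if $\inf\{\theta u+\theta^{-1}v:\theta\in(0,\infty)\}$ exists in $F$ for all $u,v\in F^+$; in that case $u\boxtimes v:=2^{-1}\inf\{\theta u+\theta^{-1}v:\theta\in(0,\infty)\}$ for $u,v\in F^+$. A map $T\colon V\times V\to F$ is a vector semi-inner product if it is bilinear ($T(x+y,z)=T(x,z)+T(y,z)$, $T(x,y+z)=T(x,y)+T(x,z)$, $\lambda T(x,y)=T(\lambda x,y)=T(x,\lambda y)$ for all $x,y,z\in V$, $\lambda\in\mathbb{R}$), symmetric ($T(x,y)=T(y,x)$), and satisfies $T(x,x)\ge 0$ for all $x\in V$. *)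

(* Defs.v *)
From HB Require Import structures.
From mathcomp Require Import all_boot all_order all_algebra.
From mathcomp Require Import boolp classical_sets reals.
Set Implicit Arguments. Unset Strict Implicit. Unset Printing Implicit Defensive.
Import Order.TTheory GRing.Theory Num.Theory.
Local Open Scope ring_scope.
Local Open Scope classical_set_scope.

Section VL.
Context {R : realType} {F : lmodType R} (le : F -> F -> Prop).

Definition is_inf (S : set F) (a : F) : Prop :=
  (forall s, S s -> le a s) /\ (forall b, (forall s, S s -> le b s) -> le b a).

Definition is_sup (S : set F) (a : F) : Prop :=
  (forall s, S s -> le s a) /\ (forall b, (forall s, S s -> le s b) -> le a b).

Definition vector_lattice : Prop :=
  [/\ (forall x, le x x) /\
      (forall x y, le x y -> le y x -> x = y) /\
      (forall x y z, le x y -> le y z -> le x z),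
      (forall x y z, le x y -> le (x + z) (y + z)),
      (forall (a : R) x y, 0 <= a -> le x y -> le (a *: x) (a *: y)) &
      (forall x y, exists s, is_sup [set x; y] s)].

Definition archimedean_vl : Prop :=
  forall x y, le 0 x -> (forall n : nat, le (x *+ n) y) -> x = 0.

Definition positive (x : F) : Prop := le 0 x.

Definition gm_set (u v : F) : set F :=
  [set w | exists theta : R, 0 < theta /\ w = theta *: u + theta^-1 *: v].

Definition geometric_mean_closed : Prop :=
  forall u v, positive u -> positive v -> exists a, is_inf (gm_set u v) a.

(* u ⊠ v := 2^-1 inf { theta u + theta^-1 v : theta > 0 } (the infimum, when it
   exists, is unique since le is antisymmetric; 0 is a junk value otherwise) *)
Definition gmean (u v : F) : F := (2%:R)^-1 *: xget 0 [set a | is_inf (gm_set u v) a].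

End VL.

Section SIP.
Context {R : realType} {V F : lmodType R} (le : F -> F -> Prop).

Definition vector_semi_inner_product (T : V -> V -> F) : Prop :=
  [/\ (forall x y z, T (x + y) z = T x z + T y z),
      (forall x y z, T x (y + z) = T x y + T x z),
      (forall (l : R) x y, l *: T x y = T (l *: x) y /\ l *: T x y = T x (l *: y)),
      (forall x y, T x y = T y x) &
      (forall x, le 0 (T x x))].

Definition seminormTu (T : V -> V -> F) (u : F) (x : V) : F := gmean le (T x x) u.

End SIP.

(* Main.v *)
Require Import Defs.
From HB Require Import structures.
From mathcomp Require Import all_boot all_order all_algebra.
From mathcomp Require Import boolp classical_sets reals.
From mathcomp Require Import ring lra.
Import Order.TTheory GRing.Theory Num.Theory.
Local Open Scope ring_scope.

Set Implicit Arguments.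
Section Ord.
Variables (R : realType) (F : lmodType R) (le : F -> F -> Prop).
Hypothesis HF : vector_lattice le.

Lemma leR x : le x x.
Proof. by case: HF => [[r _] _ _ _]. Qed.
Lemma leA x y : le x y -> le y x -> x = y.
Proof. by case: HF => [[_ [a _]] _ _ _]; apply: a. Qed.
Lemma leT x y z : le x y -> le y z -> le x z.
Proof. by case: HF => [[_ [_ t]] _ _ _]; apply: t. Qed.
Lemma leDr x y z : le x y -> le (x + z) (y + z).
Proof. by case: HF => [_ d _ _]; apply: d. Qed.
Lemma leDl x y z : le x y -> le (z + x) (z + y).
Proof. by move=> h; rewrite ![z + _]addrC; apply: leDr. Qed.
Lemma leZ (a : R) x y : 0 <= a -> le x y -> le (a *: x) (a *: y).
Proof. by case: HF => [_ _ s _]; apply: s. Qed.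
Lemma leD2 x1 y1 x2 y2 : le x1 y1 -> le x2 y2 -> le (x1 + x2) (y1 + y2).
Proof. move=> h1 h2; exact: (leT (leDr x2 h1) (leDl y1 h2)). Qed.
Lemma le0D x y : le 0 x -> le 0 y -> le 0 (x + y).
Proof. by move=> h1 h2; rewrite -(addr0 0); apply: leD2. Qed.
Lemma le0Z (a : R) x : 0 <= a -> le 0 x -> le 0 (a *: x).
Proof. by move=> h1 h2; rewrite -(scaler0 _ a); apply: leZ. Qed.
Lemma le_subl x t y : le (x - t) y -> le x (y + t).
Proof. by move=> h; have := leDr t h; rewrite subrK. Qed.
Lemma le_subr x t y : le x (y + t) -> le (x - t) y.
Proof. by move=> h; have := leDr (- t) h; rewrite addrK. Qed.

Lemma inf_uniq S a b : is_inf le S a -> is_inf le S b -> a = b.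
Proof.
move=> [la ga] [lb gb]; apply: leA; [exact: gb | exact: ga].
Qed.

Hypothesis Hgm : geometric_mean_closed le.

Definition ginf (w u : F) := xget (0 : F) (fun a : F => is_inf le (gm_set w u) a).

Lemma ginfP w u : le 0 w -> le 0 u -> is_inf le (gm_set w u) (ginf w u).
Proof. by move=> hw hu; apply: (xgetPex 0); apply: Hgm. Qed.

Lemma gm_mem (w u : F) (t : R) : 0 < t -> gm_set w u (t *: w + t^-1 *: u).
Proof. by move=> ht; exists t. Qed.

Lemma ginf_ge0 w u : le 0 w -> le 0 u -> le 0 (ginf w u).
Proof.
move=> hw hu; have [_ g] := ginfP hw hu; apply: g => s [t [ht ->]].
by apply: le0D; apply: le0Z => //; rewrite ?invr_ge0 ltW.
Qed.

Lemma gmeanE w u : gmean le w u = 2%:R^-1 *: ginf w u.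
Proof. by []. Qed.


Hypothesis Harch : archimedean_vl le.

Lemma ginf0 (u : F) : le 0 u -> is_inf le (gm_set 0 u) 0.
Proof.
move=> hu; split.
- move=> s [t [ht ->]]; rewrite scaler0 add0r; apply: le0Z => //.
  by rewrite invr_ge0 ltW.
- move=> c hc.
  case: HF => [_ _ _ hsup]; have [s [us gs]] := hsup c 0.
  have cs : le c s by apply: us; left.
  have s0 : le 0 s by apply: us; right.
  suff e : s = 0 by rewrite e in cs.
  apply: (@Harch s u s0); case=> [|n]; first by rewrite mulr0n.
  rewrite -scaler_nat.
  have hn : (0:R) < n.+1%:R by rewrite ltr0Sn.
  have : le s (n.+1%:R^-1 *: u).
    apply: gs => x [->|->].
    + by have := hc _ (gm_mem 0 u _ hn); rewrite scaler0 add0r.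
    + by apply: le0Z => //; rewrite invr_ge0 ltW.
  by move/(leZ _ (ltW hn)); rewrite scalerA mulfV ?gt_eqF // scale1r.
Qed.

Lemma ginf_scale (w u : F) (k : R) : 0 < k -> le 0 w -> le 0 u ->
  is_inf le (gm_set ((k * k) *: w) u) (k *: ginf w u).
Proof.
move=> hk hw hu; have [lA gA] := ginfP hw hu.
have k0 : k != 0 by rewrite gt_eqF.
split.
- move=> s [t [ht ->]].
  have htk : 0 < t * k by rewrite mulr_gt0.
  have := leZ _ (ltW hk) (lA _ (gm_mem w u _ htk)).
  rewrite scalerDr !scalerA.
  have -> : k * (t * k) = t * (k * k) by ring.
  have t0 : t != 0 by rewrite gt_eqF.
  have -> : k * (t * k)^-1 = t^-1 by field; rewrite t0 k0.
  exact: id.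
- move=> c hc.
  suff h : le (k^-1 *: c) (ginf w u).
    by have := leZ _ (ltW hk) h; rewrite scalerA mulfV // scale1r.
  apply: gA => s [t [ht ->]].
  have htk : 0 < t / k by rewrite divr_gt0.
  have hki : 0 <= k^-1 by rewrite invr_ge0 ltW.
  have := leZ _ hki (hc _ (gm_mem ((k * k) *: w) u _ htk)).
  rewrite scalerDr !scalerA.
  have t0 : t != 0 by rewrite gt_eqF.
  have -> : k^-1 * (t / k) * (k * k) = t by field.
  have -> : k^-1 / (t / k) = t^-1 by field; rewrite t0 k0.
  exact: id.
Qed.

End Ord.


Section L4.
Variables (R : realType) (F : lmodType R) (a b p u : F).
Definition L4 (k1 k2 k3 k4 : R) := k1 *: a + k2 *: b + k3 *: p + k4 *: u.
Lemma L4D k1 k2 k3 k4 l1 l2 l3 l4 :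
  L4 k1 k2 k3 k4 + L4 l1 l2 l3 l4 = L4 (k1 + l1) (k2 + l2) (k3 + l3) (k4 + l4).
Proof. rewrite /L4 !scalerDl addrACA; congr (_ + _); rewrite addrACA; congr (_ + _); by rewrite addrACA. Qed.
Lemma L4Z r k1 k2 k3 k4 : r *: L4 k1 k2 k3 k4 = L4 (r * k1) (r * k2) (r * k3) (r * k4).
Proof. by rewrite /L4 !scalerDr !scalerA. Qed.
Lemma L4a : a = L4 1 0 0 0. Proof. by rewrite /L4 !scale0r scale1r !addr0. Qed.
Lemma L4b : b = L4 0 1 0 0. Proof. by rewrite /L4 !scale0r scale1r !addr0 add0r. Qed.
Lemma L4p : p = L4 0 0 1 0. Proof. by rewrite /L4 !scale0r scale1r !addr0 !add0r. Qed.
Lemma L4u : u = L4 0 0 0 1. Proof. by rewrite /L4 !scale0r scale1r !add0r. Qed.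
End L4.


Lemma tri_id (R : realType) (F : lmodType R) (a b p u : F) (t f : R) :
  0 < t -> 0 < f ->
  let s := t * f / (t + f) in
  s *: (a + b + (p + p)) + s^-1 *: u
    + (t + f)^-1 *: ((t * t) *: a + (f * f) *: b + (- (2%:R * t * f)) *: p)
  = t *: a + t^-1 *: u + (f *: b + f^-1 *: u).
Proof.
move=> ht hf s.
pose g := @L4 _ _ a b p u.
have ha : a = g 1 0 0 0 by exact: L4a.
have hb : b = g 0 1 0 0 by exact: L4b.
have hp : p = g 0 0 1 0 by exact: L4p.
have hu : u = g 0 0 0 1 by exact: L4u.
rewrite ha hb hp hu /g; rewrite !(L4Z, L4D).
have t0 : t != 0 by rewrite gt_eqF.
have f0 : f != 0 by rewrite gt_eqF.
have tf0 : t + f != 0 by rewrite gt_eqF // addr_gt0.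
rewrite /s; congr (L4 _ _ _ _ _ _ _ _); field; rewrite ?t0 ?f0 ?tf0 //.
Qed.

Theorem theorem3p3 (R : realType) (V F : lmodType R) (le : F -> F -> Prop)
  (HF : vector_lattice le) (Harch : archimedean_vl le)
  (Hgm : geometric_mean_closed le)
  (u : F) (Hu : le 0 u) (T : V -> V -> F) (HT : vector_semi_inner_product le T) :
  [/\ (forall x : V, le 0 (seminormTu le T u x)),
      (forall (x : V) (a : R), seminormTu le T u (a *: x) = `|a| *: seminormTu le T u x) &
      (forall x y : V, le (seminormTu le T u (x + y))
                          (seminormTu le T u x + seminormTu le T u y))].
Proof.
case: HT => [TDl TDr TZ Tsym Tpos].
have TZZ : forall (al be : R) v w, T (al *: v) (be *: w) = (al * be) *: T v w.
  by move=> al be v w; rewrite -(TZ al v _).1 -(TZ be v w).2 scalerA.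
have h2 : (0:R) <= 2%:R^-1 by rewrite invr_ge0 ler0n.
split.
- move=> x; rewrite /seminormTu gmeanE; apply: (le0Z HF) => //.
  exact: (ginf_ge0 HF Hgm).
- move=> x a; rewrite /seminormTu !gmeanE TZZ.
  case: (eqVneq a 0) => [->|a0].
    rewrite mul0r scale0r normr0 scale0r.
    by rewrite (inf_uniq HF (ginfP Hgm _ _ (leR HF 0) Hu) (ginf0 HF Harch _ Hu)) scaler0.
  have ka : a * a = `|a| * `|a| by rewrite -normrM ger0_norm // -expr2 sqr_ge0.
  have hk : 0 < `|a| by rewrite normr_gt0.
  rewrite ka (inf_uniq HF (ginfP Hgm _ _ _ Hu) (ginf_scale HF Hgm _ _ _ hk (Tpos x) Hu)).
    by rewrite !scalerA mulrC.
  by apply: (le0Z HF) => //; rewrite mulr_ge0.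
- move=> x y; rewrite /seminormTu !gmeanE -scalerDr; apply: (leZ HF) => //.
  set a := T x x; set b := T y y; set c := T (x + y) (x + y); set p := T x y.
  have hc : c = a + b + (p + p).
    by rewrite /c TDl !TDr (Tsym y x) -/a -/b -/p [p + b]addrC addrACA.
  have [lA gA] := ginfP Hgm _ _ (Tpos x) Hu.
  have [lB gB] := ginfP Hgm _ _ (Tpos y) Hu.
  have [lC gC] := ginfP Hgm _ _ (Tpos (x + y)) Hu.
  set A := ginf _ _ a u in lA gA *; set B := ginf _ _ b u in lB gB *;
  set C := ginf _ _ c u in lC gC *.
  have pt : forall t f : R, 0 < t -> 0 < f ->
      le C (t *: a + t^-1 *: u + (f *: b + f^-1 *: u)).
    move=> t f ht hf.
    have hs : 0 < t * f / (t + f) by rewrite divr_gt0 ?mulr_gt0 ?addr_gt0.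
    apply: (leT HF _ ((t * f / (t + f)) *: c + (t * f / (t + f))^-1 *: u)).
      exact: (lC _ (gm_mem _ c u _ hs)).
    rewrite -(tri_id _ a b p u _ _ ht hf) /= hc.
    rewrite -[X in le X _]addr0; apply: (leDl HF).
    apply: (le0Z HF); first by rewrite invr_ge0 ltW // addr_gt0.
    have := Tpos (t *: x + (- f) *: y).
    rewrite TDl !TDr !TZZ (Tsym y x) -/a -/b -/p.
    have -> : (t * t) *: a + (t * - f) *: p + ((- f * t) *: p + (- f * - f) *: b)
        = (t * t) *: a + (f * f) *: b + (- (2%:R * t * f)) *: p; last by [].
    pose g := @L4 _ _ a b p u.
    have ea : a = g 1 0 0 0 by exact: L4a.
    have eb : b = g 0 1 0 0 by exact: L4b.
    have ep : p = g 0 0 1 0 by exact: L4p.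
    rewrite ea eb ep /g; rewrite !(L4Z, L4D).
    congr (L4 _ _ _ _ _ _ _ _); ring.
  have h1 : forall f : R, 0 < f -> le (C - (f *: b + f^-1 *: u)) A.
    move=> f hf; apply: gA => s [t [ht ->]]; apply: (le_subr HF); exact: pt.
  have h3 : le (C - A) B.
    apply: gB => s [f [hf ->]]; apply: (le_subr HF); rewrite addrC.
    apply: (le_subl HF); exact: h1.
  by rewrite addrC; apply: (le_subl HF).
Qed.
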